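(* Let $G$ be a finite graph with no isolated vertices such that there is no nontrivial circuit injection $f:G_M\rightarrow B$ with $B$ a binary matroid. If $G$ has $2N$ vertices, then $G$ is Hamiltonian; if $G$ has $2N+1$ vertices, then $G$ is almost Hamiltonian.
   Context: Graphs are undirected without loops or multiple edges. $G_M$ is the cycle matroid of $G$ (cells: edges; circuits: edge sets of cycles of $G$). A matroid is a pair $(S,\mathscr{C})$, $S\neq\emptyset$, $\mathscr{C}\subseteq 2^S$, satisfying: (I) $A,B\in\mathscr{C}$, $A\subseteq B$ implies $A=B$; (II) $A,B\in\mathscr{C}$, $a\in A\cap B$, $b\in (A\cup B)\setminus(A\cap B)$ implies there exists $D\in\mathscr{C}$ with $D\subseteq A\cup B$, $a\notin D$, $b\in D$. A matroid is binary if the symmetric difference of any two circuits is a union of pairwise disjoint circuits. A circuit injection $f:G_M\rightarrow B$ is a bijection from $E(G)$ onto the cells of $B$ sending each circuit of $G$ to a circuit of $B$; it is nontrivial if $B$ has a circuit not equal to the image of any circuit of $G$. $G$ is Hamiltonian if some circuit contains all its vertices. A graph with $n$ vertices is almost Hamiltonian if every set of $n-1$ of its vertices is contained in the vertex set of some circuit. *)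

(* Defs.v *)
From mathcomp Require Import all_boot.
Set Implicit Arguments. Unset Strict Implicit. Unset Printing Implicit Defensive.

Definition simple_graph (T : finType) (e : rel T) : Prop :=
  symmetric e /\ irreflexive e.

Definition edges (T : finType) (e : rel T) : {set {set T}} :=
  [set A : {set T} | [exists x, exists y, e x y && (A == [set x; y])]].

Definition graph_cycle (T : finType) (e : rel T) (c : seq T) : Prop :=
  ucycle e c /\ 3 <= size c.

Definition cycle_edges (T : finType) (c : seq T) : {set {set T}} :=
  [set [set x; next c x] | x in c].

(* Circuits of the cycle matroid G_M: edge sets of cycles of G. *)
Definition graph_circuit (T : finType) (e : rel T) (X : {set {set T}}) : Prop :=
  exists c, graph_cycle e c /\ X = cycle_edges c.

Definition no_isolated (T : finType) (e : rel T) : Prop :=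
  forall x, exists y, e x y.

Definition hamiltonian (T : finType) (e : rel T) : Prop :=
  exists c, graph_cycle e c /\ forall x : T, x \in c.

Definition almost_hamiltonian (T : finType) (e : rel T) : Prop :=
  forall A : {set T}, #|A| = #|T| - 1 ->
    exists c, graph_cycle e c /\ A \subset [set x in c].

(* Matroid on the finite nonempty cell set S, given by its circuits C. *)
Definition matroid (S : finType) (C : {set {set S}}) : Prop :=
  0 < #|S| /\
  (forall A B, A \in C -> B \in C -> A \subset B -> A = B) /\
  (forall A B a b, A \in C -> B \in C -> a \in A :&: B ->
     b \in (A :|: B) :\: (A :&: B) ->
     exists2 D, D \in C & [/\ D \subset A :|: B, a \notin D & b \in D]).

Definition binary_matroid (S : finType) (C : {set {set S}}) : Prop :=
  forall A B, A \in C -> B \in C ->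
    exists P : {set {set S}},
      [/\ P \subset C, trivIset P & cover P = (A :\: B) :|: (B :\: A)].

Definition circuit_injection (T S : finType) (e : rel T) (C : {set {set S}})
    (f : {set T} -> S) : Prop :=
  [/\ {in edges e &, injective f},
      (forall s : S, exists2 A, A \in edges e & f A = s) &
      (forall X, graph_circuit e X -> f @: X \in C)].

Definition nontrivial_ci (T S : finType) (e : rel T) (C : {set {set S}})
    (f : {set T} -> S) : Prop :=
  exists2 Y, Y \in C & forall X, graph_circuit e X -> f @: X <> Y.

(* Main.v *)
Require Import Defs.
From mathcomp Require Import all_boot zify.
From Stdlib Require Import Classical.
Set Implicit Arguments. Unset Strict Implicit. Unset Printing Implicit Defensive.

Section BinMat.
Variable S : finType.
Variable W : {set S} -> bool.
Hypothesis Wsd : forall X Y, W X -> W Y -> W ((X :\: Y) :|: (Y :\: X)).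

Definition minC := [set X : {set S} | [&& X != set0, W X &
   [forall Y : {set S}, (Y \proper X) ==> (Y != set0) ==> ~~ W Y]]].

Lemma sub_min Y : W Y -> Y != set0 -> exists2 D, D \in minC & D \subset Y.
Proof.
move: {2}#|Y| (leqnn #|Y|) => n; elim: n Y => [|n IH] Y.
  by rewrite leqn0 cards_eq0 => /eqP -> _; rewrite eqxx.
move=> hY WY Y0.
case hm: (Y \in minC); first by exists Y.
move: hm; rewrite inE Y0 WY /= => /negbT /forallPn [Z]; rewrite !negb_imply ?negbK.
case/and3P => pZ Z0 /andP[WZ _].
have [D DC DZ] := IH Z (leq_trans (proper_card pZ) hY) WZ Z0.
by exists D => //; apply: subset_trans DZ (proper_sub pZ).
Qed.

Lemma decomp X : W X -> exists P : {set {set S}},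
  [/\ P \subset minC, trivIset P & cover P = X].
Proof.
move: {2}#|X| (leqnn #|X|) => n; elim: n X => [|n IH] X.
  rewrite leqn0 cards_eq0 => /eqP -> _; exists set0.
  by rewrite sub0set /trivIset /cover !big_set0 cards0.
move=> hX WX.
have [->|X0] := eqVneq X set0.
  exists set0; by rewrite sub0set /trivIset /cover !big_set0 cards0.
have [D DC DX] := sub_min WX X0.
have WD : W D by move: DC; rewrite inE => /and3P[].
have D0 : D != set0 by move: DC; rewrite inE => /and3P[].
have eXD : (X :\: D) :|: (D :\: X) = X :\: D.
  by apply/setP => x; rewrite !inE; have := subsetP DX x; case: (x \in D); case: (x \in X) => // /(_ isT).
have W' : W (X :\: D) by rewrite -eXD; apply: Wsd.
have lt : #|X :\: D| <= n.
  have: #|X :\: D| < #|X|.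
    rewrite -(cardsID D X) (setIidPr DX) -addn1 addnC leq_add2r card_gt0 //.
  by move=> h; rewrite -ltnS; apply: leq_trans h hX.
have [P [PC tP cP]] := IH _ lt W'.
have P0 : set0 \notin P by apply/negP => /(subsetP PC); rewrite inE eqxx.
have dis : {in P, forall B : {set S}, [disjoint D & B]}.
  move=> B BP; rewrite -setI_eq0; apply/eqP/setP => x; rewrite !inE.
  apply/negP => /andP[xD xB].
  have: x \in cover P by apply/bigcupP; exists B.
  by rewrite cP !inE xD.
have [tP' _] := trivIsetU1 dis tP P0.
exists (D |: P); split => //.
  by apply/subsetP => B; rewrite in_setU1 => /orP[/eqP->|/(subsetP PC)].
rewrite /cover bigcup_setU big_set1 -/(cover P) cP.
by apply/setP => x; rewrite !inE; have := subsetP DX x; case: (x \in D); case: (x \in X) => // /(_ isT).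
Qed.
End BinMat.

Lemma next_rot_nth (T : eqType) (x0 : T) q i : uniq (x0 :: q) -> i < size q ->
  next (x0 :: q) (nth x0 (x0 :: q) i) = nth x0 q i.
Proof.
move=> u hi; have hi' : i < size (x0 :: q) by rewrite /= ltnS ltnW.
by rewrite next_nth mem_nth // index_uniq.
Qed.

Lemma K4 (T : eqType) (c : seq T) (P : pred T) y0 y1 : uniq c ->
  y0 \in c -> y1 \in c -> P y1 -> ~~ P y0 ->
  exists2 y, y \in c & P y && ~~ P (next c y).
Proof.
move=> uc y0c y1c Py1 Py0.
case: (rot_to y1c) => i q hq.
have uq : uniq (y1 :: q) by rewrite -hq rot_uniq.
have nx : forall z, next c z = next (y1 :: q) z.
  by move=> z; rewrite -hq next_rot.
have mc : forall z, (z \in c) = (z \in y1 :: q) by move=> z; rewrite -hq mem_rot.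
set j := find (predC P) (y1 :: q).
have hj : j < size (y1 :: q).
  rewrite -has_find; apply/hasP; exists y0; by rewrite -?mc.
have j0 : j != 0.
  by rewrite /j /= Py1.
exists (nth y1 (y1 :: q) j.-1).
  by rewrite mc mem_nth // (leq_ltn_trans (leq_pred _) hj).
rewrite nx next_rot_nth //; last by move: hj j0 => /=; lia.
have hh : has (predC P) (y1 :: q) by rewrite has_find.
have h := nth_find y1 hh; rewrite -/j in h.
have h2 := before_find y1 (_ : j.-1 < j); rewrite -/j in h2.
have lt : j.-1 < j by lia.
move: (h2 lt) => /= /negbFE ->; rewrite /=.
have -> : nth y1 q j.-1 = nth y1 (y1 :: q) j by case: (j) j0.
exact: h.
Qed.

Lemma K2 (T : eqType) (c : seq T) x : uniq c -> 3 <= size c -> x \in c ->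
  next c x != prev c x.
Proof.
move=> uc sc xc.
case: (rot_to xc) => i q hq.
have uq : uniq (x :: q) by rewrite -hq rot_uniq.
have sq : 2 <= size q by move: sc; rewrite -(size_rot i) hq /=.
rewrite -(next_rot i uc) -(prev_rot i uc) hq.
have -> : next (x :: q) x = nth x q 0.
  by rewrite -(@next_rot_nth _ x q 0 uq) //; lia.
rewrite prev_nth mem_head.
move: uq => /= /andP[xq uq].
have -> : index x q = size q by apply: memNindex.
have -> : nth x (x :: q) (size q) = nth x q (size q).-1 by case: (size q) sq.
rewrite nth_uniq //; lia.
Qed.

Definition sdiff (U : finType) (A B : {set U}) := (A :\: B) :|: (B :\: A).

Lemma in_sdiff (U : finType) (A B : {set U}) x :
  (x \in sdiff A B) = (x \in A) (+) (x \in B).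
Proof. by rewrite !inE; case: (x \in A); case: (x \in B). Qed.

Lemma odd_sdiff (U : finType) (A B : {set U}) :
  odd #|sdiff A B| = odd #|A| (+) odd #|B|.
Proof.
have h : #|sdiff A B| = #|A :\: B| + #|B :\: A|.
  rewrite /sdiff cardsU.
  suff -> : (A :\: B) :&: (B :\: A) = set0 by rewrite cards0 subn0.
  by apply/setP => x; rewrite !inE; case: (x \in A); case: (x \in B).
rewrite h -(cardsID B A) -(cardsID A B) setIC !oddD.
by case: (odd _); case: (odd _); case: (odd _).
Qed.

Section G.
Variables (T : finType) (e : rel T).
Definition ES := {A : {set T} | A \in edges e}.
Definition deg (X : {set ES}) (x : T) := #|[set s in X | x \in val s]|.
Definition bd (X : {set ES}) := [set x | odd (deg X x)].

Lemma bd_sd (X Y : {set ES}) : bd (sdiff X Y) = sdiff (bd X) (bd Y).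
Proof.
apply/(@setP T) => x; rewrite in_sdiff !inE /deg -odd_sdiff; congr (odd _); apply: eq_card => s.
by rewrite !(in_sdiff, inE); case: (s \in X); case: (s \in Y); case: (x \in val s).
Qed.

Lemma bd0 : bd set0 = set0.
Proof. by apply/setP => x; rewrite !inE /deg; rewrite (_ : [set s in set0 | _] = set0) ?cards0 //; apply/setP => s; rewrite !inE. Qed.

Lemma bd1 (s : ES) u w : val s = [set u; w] -> u != w -> bd [set s] = sdiff [set u] [set w].
Proof.
move=> hs uw; apply/setP => x; rewrite in_sdiff !inE /deg.
case hx: (x \in val s).
  rewrite (_ : [set t in [set s] | x \in val t] = [set s]) ?cards1.
    move: hx; rewrite hs !inE; case/orP => /eqP ->; rewrite ?eqxx //= ?(negbTE uw) //.
    by rewrite eq_sym (negbTE uw).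
  by apply/setP => t; rewrite !inE; case: eqP => // ->.
rewrite (_ : [set t in [set s] | x \in val t] = set0) ?cards0.
  by move: hx; rewrite hs !inE; case: (x == u); case: (x == w).
by apply/setP => t; rewrite !inE; case: eqP => // ->; rewrite hx.
Qed.

Hypothesis esym : symmetric e.
Hypothesis eirr : irreflexive e.

Lemma edge_in u v : e u v -> [set u; v] \in edges e.
Proof. by move=> h; rewrite inE; apply/existsP; exists u; apply/existsP; exists v; rewrite h eqxx. Qed.

Definition mkE u v (h : e u v) : ES := exist (fun A => A \in edges e) _ (edge_in h).

Lemma bd_mkE u v (h : e u v) : bd [set mkE h] = sdiff [set u] [set v].
Proof.
apply: bd1 => //; apply/negP => /eqP uv; move: h; rewrite uv.
by rewrite eirr.
Qed.

Lemma walk u p : path e u p -> exists X : {set ES}, bd X = sdiff [set u] [set last u p].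
Proof.
elim: p u => [|v p IH] u /=.
  move=> _; exists set0; rewrite bd0; apply/setP => x; rewrite in_sdiff inE.
  by rewrite addbb inE.
case/andP => huv /IH [X' hX']; exists (sdiff [set mkE huv] X').
rewrite bd_sd bd_mkE hX'; apply/setP => x; rewrite !in_sdiff !inE.
by case: (x == u); case: (x == v); case: (x == last v p).
Qed.

Lemma tjoin (conn : forall x y, connect e x y) (T0 : {set T}) :
  ~~ odd #|T0| -> exists X, bd X = T0.
Proof.
move: {2}#|T0| (leqnn #|T0|) => n; elim: n T0 => [|n IH] T0.
  rewrite leqn0 cards_eq0 => /eqP -> _; exists set0; exact: bd0.
move=> hn hodd; have [->|/set0Pn [u uT]] := eqVneq T0 set0.
  exists set0; exact: bd0.
have c1 := cardsD1 u T0; rewrite uT in c1.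
have : T0 :\ u != set0.
  apply/negP => /eqP h; move: c1 hodd; rewrite h cards0 => ->. done.
case/set0Pn => w wT.
have c2 := cardsD1 w (T0 :\ u); rewrite wT in c2.
have h2 : #|T0 :\ u :\ w| <= n by lia.
have h3 : ~~ odd #|T0 :\ u :\ w|.
  move: hodd; rewrite c1 c2 /= !oddD /=. by case: (odd _).
have [X'' hX''] := IH _ h2 h3.
have [p pp pl] := connectP (conn u w).
have [Xp hXp] := walk pp.
exists (sdiff X'' Xp); rewrite bd_sd hX'' hXp -pl.
apply/setP => x; rewrite !in_sdiff !inE.
move: wT; rewrite !inE => /andP[wu wT].
case: (eqVneq x u) => [->|xu]; first by rewrite uT eq_sym (negbTE wu) andbF.
case: (eqVneq x w) => [->|xw] /=; first by rewrite wT.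
by rewrite addbF.
Qed.
End G.

Section Cyc.
Variables (T : finType) (e : rel T).
Hypothesis esym : symmetric e.
Hypothesis eirr : irreflexive e.
Variable c : seq T.
Hypothesis hc : graph_cycle e c.

Let cyc : cycle e c. Proof. by case: hc => /andP[]. Qed.
Let uc : uniq c. Proof. by case: hc => /andP[]. Qed.
Let sc : 3 <= size c. Proof. by case: hc. Qed.

Definition Xc := [set s : ES e | val s \in cycle_edges c].

Lemma XcP (s : ES e) : s \in Xc -> exists2 y, y \in c & val s = [set y; next c y].
Proof. by rewrite inE => /imsetP[y yc ->]; exists y. Qed.

Lemma vert_in (s : ES e) x : s \in Xc -> x \in val s -> x \in c.
Proof.
case/XcP => y yc ->; rewrite !inE => /orP[] /eqP ->; by rewrite ?mem_next.
Qed.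

Lemma K1 x y : y \in c -> (x \in [set y; next c y]) = (y == x) || (y == prev c x).
Proof.
move=> yc; rewrite !inE (eq_sym x y); case: (y == x) => //=.
apply/idP/idP => [/eqP ->|/eqP ->]; first by rewrite (prev_next uc).
by rewrite (next_prev uc).
Qed.

Lemma deg_sub (Y : {set ES e}) x : Y \subset Xc ->
  [set s in Y | x \in val s] =
  [set s in Y | (val s == [set x; next c x]) || (val s == [set prev c x; x])].
Proof.
move=> YX; apply/setP => s; rewrite !inE; case sY: (s \in Y) => //=.
have [y yc ->] := XcP (subsetP YX _ sY).
apply/idP/idP.
  rewrite K1 // => /orP[] /eqP ->; first by rewrite eqxx.
  by rewrite (next_prev uc) eqxx orbT.
by case/orP => /eqP ->; rewrite !inE eqxx ?orbT.
Qed.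

Lemma bdXc : bd Xc = set0.
Proof.
apply/setP => x; rewrite !inE /deg.
case xc: (x \in c); last first.
  rewrite (_ : [set s in Xc | x \in val s] = set0) ?cards0 //.
  apply/setP => s; rewrite !inE; apply/negP => /andP[sX xs]; have sX2 : s \in Xc by rewrite inE.
  by move: (vert_in sX2 xs); rewrite xc.
rewrite deg_sub //.
pose s1 : ES e := mkE (next_cycle cyc xc).
pose s2 : ES e := mkE (prev_cycle cyc xc).
rewrite (_ : [set s in Xc | _] = [set s1; s2]).
  rewrite cards2.
  suff -> : s1 != s2 by [].
  rewrite -val_eqE /=; apply/negP => /eqP h.
  have : next c x \in [set prev c x; x] by rewrite -h !inE eqxx orbT.
  rewrite !inE => /orP[/eqP h2|/eqP h2].
    by move: (K2 uc sc xc); rewrite h2 eqxx.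
  by move: (next_cycle cyc xc); rewrite h2 eirr.
apply/setP => s; rewrite !inE.
have e1 : (val s == [set x; next c x]) = (s == s1) by rewrite -val_eqE.
have e2 : (val s == [set prev c x; x]) = (s == s2) by rewrite -val_eqE.
rewrite e1 e2.
apply/andP/idP => [[_ //]|h]; split=> //.
case/orP: h => /eqP -> /=; first by apply: imset_f.
rewrite -{2}(next_prev uc x); apply: imset_f; by rewrite mem_prev.
Qed.

Lemma Xc_min (Y : {set ES e}) : Y \subset Xc -> Y != set0 -> Y != Xc -> bd Y != set0.
Proof.
move=> YX Y0 YnX.
pose P := fun y => [exists s in Y, val s == [set y; next c y]].
have [s1 s1Y] := set0Pn _ Y0.
have [y1 y1c hy1] := XcP (subsetP YX _ s1Y).
have Py1 : P y1 by apply/existsP; exists s1; rewrite s1Y hy1 eqxx.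
have : ~~ (Xc \subset Y) by apply: contra YnX => h; rewrite eqEsubset YX h.
case/subsetPn => s0 s0X s0Y.
have [y0 y0c hy0] := XcP s0X.
have Py0 : ~~ P y0.
  apply/existsP => [[s' /andP[s'Y /eqP hs']]].
  have : s' = s0 by apply: val_inj; rewrite hs' hy0.
  by move=> h; move: s'Y; rewrite h (negbTE s0Y).
have [y yc /andP[Py Pny]] := K4 uc y0c y1c Py1 Py0.
case/existsP: Py => sy /andP[syY /eqP hsy].
apply/set0Pn; exists (next c y); rewrite inE /deg deg_sub // (prev_next uc).
rewrite (_ : [set s in Y | _] = [set sy]) ?cards1 //.
apply/setP => s; rewrite !inE.
case: (eqVneq s sy) => [->|nsy]; first by rewrite syY hsy eqxx orbT.
have -> : (val s == [set y; next c y]) = false.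
  by rewrite -hsy val_eqE (negbTE nsy).
rewrite orbF; apply/negP => /andP[sY h].
by move: Pny => /existsP []; exists s; rewrite sY h.
Qed.
End Cyc.

Lemma sdiff_cases (U : finType) (A B T0 : {set U}) :
  (A == set0) || (A == T0) -> (B == set0) || (B == T0) ->
  (sdiff A B == set0) || (sdiff A B == T0).
Proof.
have h0 : forall X : {set U}, sdiff X set0 = X.
  by move=> X; apply/setP => x; rewrite in_sdiff inE addbF.
have h1 : forall X : {set U}, sdiff set0 X = X.
  by move=> X; apply/setP => x; rewrite in_sdiff inE.
have h2 : forall X : {set U}, sdiff X X = set0.
  by move=> X; apply/setP => x; rewrite in_sdiff inE addbb.
by case/orP => /eqP -> /orP[] /eqP ->; rewrite ?h0 ?h1 ?h2 eqxx ?orbT.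
Qed.

Lemma engine (T : finType) (e : rel T) (esym : symmetric e) (eirr : irreflexive e)
  (H : forall (S : finType) (C : {set {set S}}) (f : {set T} -> S),
     matroid C -> binary_matroid C -> circuit_injection e C f ->
     ~ nontrivial_ci e C f)
  (T0 : {set T}) (X0 : {set ES e}) :
  bd X0 = T0 -> T0 != set0 ->
  (forall c, graph_cycle e c -> ~ T0 \subset [set x in c]) -> False.
Proof.
move=> hX0 T00 hcyc.
pose W := fun X : {set ES e} => (bd X == set0) || (bd X == T0).
have Wsd : forall X Y, W X -> W Y -> W ((X :\: Y) :|: (Y :\: X)).
  by move=> X Y WX WY; rewrite /W -/(sdiff X Y) bd_sd; apply: sdiff_cases.
pose C := minC W.
have X00 : X0 != set0 by apply: contra T00 => /eqP h; rewrite -hX0 h bd0.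
have [s0 _] := set0Pn _ X00.
pose f := fun A : {set T} => insubd s0 A : ES e.
have fK : forall A, A \in edges e -> val (f A) = A by move=> A hA; rewrite /f insubdK.
have inC : forall X, X \in C = [&& X != set0, W X &
   [forall Y : {set ES e}, (Y \proper X) ==> (Y != set0) ==> ~~ W Y]].
  by move=> X; rewrite inE.
have imc : forall c, graph_cycle e c -> f @: cycle_edges c = Xc e c.
  move=> c hc; have cyc : cycle e c by case: hc => /andP[].
  apply/setP => s; rewrite inE; apply/imsetP/idP.
    case=> A /imsetP[y yc ->] ->; rewrite fK; first by apply: imset_f.
    exact: edge_in (next_cycle cyc yc).
  by move=> h; exists (val s) => //; rewrite /f valKd.
have XcC : forall c, graph_cycle e c -> Xc e c \in C.
  move=> c hc; have cyc : cycle e c by case: hc => /andP[].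
  rewrite inC; apply/and3P; split.
  - have [x xc] : exists x, x \in c by case: hc => _; case: c {cyc} => // x ? _; exists x; rewrite mem_head.
    apply/set0Pn; exists (mkE (next_cycle cyc xc)); rewrite inE /=; exact: imset_f.
  - by rewrite /W (bdXc eirr hc) ?eqxx.
  apply/forallP => Y; apply/implyP => pY; apply/implyP => Y0.
  have YX : Y \subset Xc e c by apply: proper_sub.
  rewrite /W negb_or; apply/andP; split.
    apply: (Xc_min hc YX Y0).
    by move: pY; rewrite properEneq => /andP[].
  apply/negP => /eqP hb; apply: (hcyc c hc); apply/subsetP => x.
  rewrite -hb /bd inE /deg => hx; rewrite inE.
  have : [set s in Y | x \in val s] != set0 by apply: contraTneq hx => ->; rewrite cards0.
  case/set0Pn => s; rewrite inE => /andP[sY xs].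
  exact: (vert_in (subsetP YX _ sY) xs).
have CW : forall X, X \in C -> W X by move=> X; rewrite inC => /and3P[].
have C0 : forall X, X \in C -> X != set0 by move=> X; rewrite inC => /and3P[].
have Cmin : forall X Y : {set ES e}, X \in C -> Y \proper X -> Y != set0 -> ~~ W Y.
  move=> X Y; rewrite inC => /and3P[_ _ /forallP /(_ Y)] h pY Y0.
  by move: h; rewrite pY Y0.
apply: (H (ES e) C f).
- split; first by apply/card_gt0P; exists s0.
  split.
    move=> A B AC BC AB; apply/eqP; apply: contraT => nAB.
    have pA : A \proper B by rewrite properEneq nAB AB.
    by move: (Cmin _ _ BC pA (C0 _ AC)); rewrite CW.
  move=> A B a b AC BC aAB bAB.
  have [P [PC tP cP]] := decomp Wsd (Wsd _ _ (CW _ AC) (CW _ BC)).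
  have : b \in cover P by rewrite cP; move: bAB; rewrite !inE; case: (b \in A); case: (b \in B).
  case/bigcupP => D DP bD; exists D; first exact: (subsetP PC).
  have DAB : D \subset (A :\: B) :|: (B :\: A) by rewrite -cP; apply: bigcup_sup.
  split=> //.
    apply: subset_trans DAB _; apply/subsetP => x; rewrite !inE.
    by case: (x \in A); case: (x \in B).
  apply/negP => aD; move: (subsetP DAB _ aD) aAB; rewrite !inE.
  by case: (a \in A); case: (a \in B).
- move=> A B AC BC.
  have [P [PC tP cP]] := decomp Wsd (Wsd _ _ (CW _ AC) (CW _ BC)).
  by exists P.
- split.
  + move=> A B hA hB hf; by rewrite -(fK _ hA) -(fK _ hB) hf.
  + by move=> s; exists (val s); [exact: valP | rewrite /f valKd].
  + by move=> X [c [hc ->]]; rewrite imc //; apply: XcC.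
have hX0' : bd X0 == T0 by rewrite hX0.
case: (@arg_minnP _ X0 (fun X => bd X == T0) (fun X => #|X|) hX0') => Ym /eqP hYm minYm.
exists Ym.
  rewrite inC; apply/and3P; split.
  - by apply: contra T00 => /eqP h; rewrite -hYm h bd0.
  - by rewrite /W hYm eqxx orbT.
  apply/forallP => Z; apply/implyP => pZ; apply/implyP => Z0.
  rewrite /W negb_or; apply/andP; split; last first.
    apply/negP => hZ; have := minYm _ hZ; rewrite leqNgt; move/negP; apply.
    exact: proper_card.
  apply/negP => /eqP hZ.
  have ZY : Z \subset Ym by apply: proper_sub.
  have hb : bd (Ym :\: Z) == T0.
    have -> : Ym :\: Z = sdiff Ym Z.
      apply/setP => x; rewrite in_sdiff !inE; have := subsetP ZY x.
      by case: (x \in Z); case: (x \in Ym) => // /(_ isT).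
    rewrite bd_sd hZ hYm; apply/eqP/setP => x; by rewrite in_sdiff inE addbF.
  have := minYm _ hb; rewrite leqNgt; move/negP; apply.
  rewrite -(cardsID Z Ym) (setIidPr ZY) -addn1 addnC leq_add2r card_gt0 //.
move=> X [c [hc ->]]; rewrite imc // => h.
by move: T00; rewrite -hYm -h (bdXc eirr hc) eqxx.
Qed.

Lemma cyc_conn (T : finType) (e : rel T) (esym : symmetric e) c x y :
  graph_cycle e c -> x \in c -> y \in c -> connect e x y.
Proof.
case=> /andP[cyc _] _; case: c cyc => // z p /= cyc xc yc.
have hz : forall w, w \in z :: p -> connect e z w.
  move=> w wc; apply: (path_connect cyc); rewrite -cats1 -cat_cons mem_cat wc //.
apply: connect_trans (hz _ yc); rewrite (sym_connect_sym esym); exact: hz.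
Qed.

Theorem lemma2p2 (T : finType) (e : rel T) :
  simple_graph e -> 0 < #|T| -> no_isolated e ->
  (forall (S : finType) (C : {set {set S}}) (f : {set T} -> S),
     matroid C -> binary_matroid C -> circuit_injection e C f ->
     ~ nontrivial_ci e C f) ->
  (forall N, #|T| = N.*2 -> hamiltonian e) /\
  (forall N, #|T| = N.*2.+1 -> almost_hamiltonian e).
Proof.
move=> [esym eirr] npos noiso H.
have csym := sym_connect_sym esym.
have conn : forall x y, connect e x y.
  move=> x y; apply: contraT => nxy.
  have [x' hx] := noiso x; have [y' hy] := noiso y.
  have xx' : x != x' by apply: contraTneq hx => ->; rewrite eirr.
  have yy' : y != y' by apply: contraTneq hy => ->; rewrite eirr.
  have cx : connect e x x' by apply: connect1.
  have cy : connect e y y' by apply: connect1.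
  have xy : x != y by apply: contraNneq nxy => ->; exact: connect0.
  have xy' : x != y' by apply: contraNneq nxy => ->; rewrite csym.
  have yx' : y != x' by apply: contraNneq nxy => yx; rewrite -yx in cx.
  pose X0 := sdiff [set mkE hx] [set mkE hy].
  exfalso; apply: (@engine T e esym eirr H (bd X0) X0 erefl).
    apply/set0Pn; exists x.
    rewrite /X0 bd_sd !(bd_mkE eirr) !in_sdiff !inE eqxx (negbTE xx') (negbTE xy) (negbTE xy') //.
  move=> c hc /subsetP sub.
  have xin : x \in bd X0.
    by rewrite /X0 bd_sd !(bd_mkE eirr) !in_sdiff !inE eqxx (negbTE xx') (negbTE xy) (negbTE xy').
  have yin : y \in bd X0.
    by rewrite /X0 bd_sd !(bd_mkE eirr) !in_sdiff !inE eqxx (negbTE yy') eq_sym (negbTE xy) (negbTE yx').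
  move: (sub _ xin) (sub _ yin); rewrite !inE => xc yc.
  by move: nxy; rewrite (cyc_conn esym hc xc yc).
split.
- move=> N hN; case: (classic (hamiltonian e)) => // nh; exfalso.
  have ev : ~~ odd #|[set: T]| by rewrite cardsT hN odd_double.
  have [X hX] := tjoin eirr conn ev.
  apply: (@engine T e esym eirr H _ X hX).
    by apply/set0Pn; have [x _] := card_gt0P npos; exists x; rewrite inE.
  move=> c hc /subsetP sub; apply: nh; exists c; split=> // x.
  by move: (sub x); rewrite !inE; apply.
- move=> N hN A hA; apply: NNPP => nh.
  have ev : ~~ odd #|A| by rewrite hA hN subn1 /= odd_double.
  have [X hX] := tjoin eirr conn ev.
  apply: (@engine T e esym eirr H _ X hX).
    rewrite -card_gt0 hA hN subn1 /=.
    case: N hN {hA} => [|N] hN; last by rewrite doubleS.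
    exfalso; have [x _] := card_gt0P npos; have [y hy] := noiso x.
    have : #|[set x; y]| <= #|T| by apply: max_card.
    rewrite cards2 hN /=; case: (eqVneq x y) => [xy|//]; by rewrite xy eirr in hy.
  move=> c hc sub; apply: nh; exists c; split=> //.
Qed.
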